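(* For $\mu=\sum_{i\in I}f_is_if_i$ and $\nu=\sum_{j\in J}g_jt_jg_j$ in $P(G,C(X))$, define $\mu\nu:=\sum_{i\in I}\sum_{j\in J}\big(f_i(s_i\cdot g_j)\big)(s_it_j)\big((s_i\cdot g_j)f_i\big)$. Then $\sum_{(i,j)\in I\times J}\big(f_i(s_i\cdot g_j)\big)^2=1$ as a norm-convergent unordered sum, so $\mu\nu\in P(G,C(X))$ (after discarding zero terms); this multiplication is associative, making $P(G,C(X))$ a semigroup, and $P_f(G,C(X))$ is a subsemigroup.
   Context: $G$ is a countable discrete group acting on a compact Hausdorff space $X$ by homeomorphisms, with $(g\cdot f)(x)=f(g^{-1}x)$ on $C(X)$. A generalized $(G,C(X))$-probability measure is a formal sum $\mu=\sum_{i\in I}f_is_if_i$ with $I$ an index set, $s_i\in G$ (repetitions allowed), $f_i\in C(X)$, $f_i\ge0$, $f_i\ne0$, $\sum_if_i^2=1$ as a norm-convergent unordered sum; $P(G,C(X))$ is the set of these and $P_f(G,C(X))$ the subset with $I$ finite. *)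

(* Defs.v *)
From HB Require Import structures.
From mathcomp Require Import all_boot all_order all_algebra.
From mathcomp Require Import finmap.
From mathcomp Require Import all_classical all_reals all_analysis.
Import numFieldNormedType.Exports.
Unset Printing Implicit Defensive.
Import Order.TTheory GRing.Theory Num.Theory.
Local Open Scope classical_set_scope.
Local Open Scope ring_scope.

(* A formal sum  \sum_{i in I} f_i s_i f_i : an index type I together with
   group elements s_i and functions f_i. *)
Record fsum (R : realType) (X : Type) (G : Type) := FSum {
  fs_idx : choiceType;
  fs_grp : fs_idx -> G;
  fs_fun : fs_idx -> X -> R }.
Arguments FSum {R X G} _ _ _.
Arguments fs_idx {R X G} _.
Arguments fs_grp {R X G} _ _.
Arguments fs_fun {R X G} _ _ _.

Definition gact {R : realType} {X G : Type} (ginv : G -> G) (act : G -> X -> X)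
  (g : G) (f : X -> R) : X -> R := fun x => f (act (ginv g) x).

(* sum_{i in I} a_i = l as a norm-convergent (sup norm) unordered sum:
   the net of finite partial sums converges to l in sup norm. *)
Definition unorm_sum_to {R : realType} {X : Type} {I : choiceType}
  (a : I -> X -> R) (l : X -> R) : Prop :=
  forall eps : R, 0 < eps -> exists F0 : {fset I}, forall F : {fset I},
    fsubset F0 F -> forall x : X, `| (\sum_(i <- F) a i x) - l x | <= eps.

Definition isP {R : realType} {X : topologicalType} {G : Type}
  (m : fsum R X G) : Prop :=
  [/\ forall i, continuous (fs_fun m i),
      forall i x, 0 <= fs_fun m i x,
      forall i, fs_fun m i <> (fun _ => 0)
    & unorm_sum_to (fun i x => fs_fun m i x ^+ 2) (fun _ => 1)].

Definition isPf {R : realType} {X : topologicalType} {G : Type}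
  (m : fsum R X G) : Prop :=
  isP m /\ finite_set [set: fs_idx m].

Definition prod_coef {R : realType} {X G : Type} (ginv : G -> G)
  (act : G -> X -> X) (m n : fsum R X G) (p : fs_idx m * fs_idx n) : X -> R :=
  fun x => fs_fun m p.1 x * gact ginv act (fs_grp m p.1) (fs_fun n p.2) x.

Definition prod_idx {R : realType} {X G : Type} (ginv : G -> G)
  (act : G -> X -> X) (m n : fsum R X G) : set (fs_idx m * fs_idx n) :=
  [set p | prod_coef ginv act m n p <> (fun _ => 0)].

Definition fs_mul {R : realType} {X G : Type} (gmul : G -> G -> G)
  (ginv : G -> G) (act : G -> X -> X) (m n : fsum R X G) : fsum R X G :=
  FSum (prod_idx ginv act m n : choiceType)
    (fun p => gmul (fs_grp m (val p).1) (fs_grp n (val p).2))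
    (fun p => prod_coef ginv act m n (val p)).

(* equality of formal sums: same terms up to a bijective reindexing *)
Definition fs_equiv {R : realType} {X G : Type} (m n : fsum R X G) : Prop :=
  exists e : fs_idx m -> fs_idx n, bijective e /\
    forall i, fs_grp n (e i) = fs_grp m i /\ fs_fun n (e i) = fs_fun m i.

(* Main.v *)
Require Import Defs.
From HB Require Import structures.
From mathcomp Require Import all_boot all_order all_algebra.
From mathcomp Require Import finmap.
From mathcomp Require Import all_classical all_reals all_analysis.
From mathcomp Require Import lra.
Import numFieldNormedType.Exports.
Import Order.TTheory GRing.Theory Num.Theory.
Local Open Scope classical_set_scope.
Local Open Scope ring_scope.

Section Sums.
Variable R : realType.

Lemma sum_split_sub (I : eqType) (s t : seq I) (a : I -> R) :
  uniq s -> uniq t -> {subset s <= t} ->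
  \sum_(i <- t) a i = \sum_(i <- s) a i + \sum_(i <- t | i \notin s) a i.
Proof.
move=> us ut st; rewrite (bigID (mem s)) /=; congr (_ + _).
rewrite -big_filter; apply: perm_big; apply: uniq_perm => //.
- exact: filter_uniq.
- move=> i; rewrite mem_filter; apply/andP/idP => [[]//|h]; split => //; exact: st.
Qed.

Lemma sum_sub_le (I : eqType) (s t : seq I) (a : I -> R) :
  uniq s -> uniq t -> {subset s <= t} -> (forall i, i \in t -> 0 <= a i) ->
  \sum_(i <- s) a i <= \sum_(i <- t) a i.
Proof.
move=> us ut st a0; rewrite (@sum_split_sub _ _ _ a us ut st) lerDl.
rewrite big_seq_cond; apply: sumr_ge0 => i /andP[it _]; exact: a0.
Qed.

Lemma sum_sub_eq (I : eqType) (s t : seq I) (a : I -> R) :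
  uniq s -> uniq t -> {subset s <= t} ->
  (forall i, i \in t -> i \notin s -> a i = 0) ->
  \sum_(i <- s) a i = \sum_(i <- t) a i.
Proof.
move=> us ut st a0; rewrite (@sum_split_sub _ _ _ a us ut st).
rewrite -[LHS]addr0; congr (_ + _); symmetry.
rewrite big_seq_cond; apply: big1 => i /andP[]; exact: a0.
Qed.

Lemma unorm_le (X : Type) (I : choiceType) (a : I -> X -> R) l :
  unorm_sum_to a l -> (forall i x, 0 <= a i x) ->
  forall (F : {fset I}) x, \sum_(i <- F) a i x <= l x.
Proof.
move=> h a0 F x; apply/ler_addgt0Pr => e e0.
have [F0 HF0] := h e e0.
have := HF0 (F `|` F0)%fset (fsubsetUr _ _) x.
rewrite ler_norml => /andP[_ H].
apply: le_trans (_ : \sum_(i <- (F `|` F0)%fset) a i x <= _).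
  apply: sum_sub_le; rewrite ?fset_uniq //.
  by move=> i iF; rewrite inE iF.
by rewrite -lerBlDl.
Qed.


Lemma unorm_le_seq {X : Type} {I : choiceType} {a : I -> X -> R} {l} :
  unorm_sum_to a l -> (forall i x, 0 <= a i x) ->
  forall (s : seq I) x, uniq s -> \sum_(i <- s) a i x <= l x.
Proof.
move=> h a0 s x us.
have -> : \sum_(i <- s) a i x = \sum_(i <- [fset i in s]%fset) a i x.
  apply: perm_big; apply: uniq_perm; rewrite ?fset_uniq //.
  by move=> i; rewrite inE.
exact: unorm_le.
Qed.

Lemma unorm_prod (X : Type) (I J : choiceType) (a : I -> X -> R)
  (c : I -> J -> X -> R) :
  (forall i x, 0 <= a i x) -> (forall i j x, 0 <= c i j x) ->
  unorm_sum_to a (fun _ => 1) ->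
  (forall eps : R, 0 < eps -> exists G0 : {fset J}, forall G : {fset J},
     fsubset G0 G -> forall i x, `|\sum_(j <- G) c i j x - 1| <= eps) ->
  unorm_sum_to (fun p x => a p.1 x * c p.1 p.2 x) (fun _ => 1).
Proof.
move=> a0 c0 ha hc eps e0.
have e20 : 0 < eps / 2 by rewrite divr_gt0.
have hc' : forall i, unorm_sum_to (c i) (fun _ => 1).
  move=> i e e1; have [G0 HG] := hc e e1; exists G0 => G sG x; exact: HG.
have [F0 HF] := ha _ e20; have [G0 HG] := hc _ e20.
exists [fset p in [seq (i, j) | i <- F0, j <- G0]]%fset => F sub x.
have pinj : forall (A : seq I) (B : seq J), uniq A -> uniq B ->
    uniq [seq (i, j) | i <- A, j <- B].
  move=> A B uA uB; apply: allpairs_uniq => // [[i j]] [i' j'] _ _ /=; done.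
have ge0 : forall p, 0 <= a p.1 x * c p.1 p.2 x by move=> p; rewrite mulr_ge0.
set A := undup [seq p.1 | p <- F]; set B := undup [seq p.2 | p <- F].
have up : \sum_(p <- F) a p.1 x * c p.1 p.2 x <= 1.
  apply: le_trans (_ : \sum_(p <- [seq (i, j) | i <- A, j <- B])
                        a p.1 x * c p.1 p.2 x <= _).
    apply: sum_sub_le; rewrite ?fset_uniq ?pinj ?undup_uniq //.
    move=> [i j] pF; apply/allpairsP; exists (i, j); split => //=.
      by rewrite mem_undup; apply/mapP; exists (i, j).
    by rewrite mem_undup; apply/mapP; exists (i, j).
  rewrite big_allpairs /=.
  apply: le_trans (_ : \sum_(i <- A) a i x <= _); last first.
    exact: (unorm_le_seq ha a0 _ x (undup_uniq [seq p.1 | p <- F])).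
  apply: ler_sum => i _; have -> : \sum_(j <- B) a i x * c i j x = a i x * \sum_(j <- B) c i j x by rewrite mulr_sumr.
  apply: ler_piMr; first exact: a0.
  exact: (unorm_le_seq (hc' i) (c0 i) _ x (undup_uniq [seq p.2 | p <- F])).
have sa1 : \sum_(i <- F0) a i x <= 1 by exact: (@unorm_le _ _ _ _ ha a0 F0 x).
have sa2 : 1 - eps / 2 <= \sum_(i <- F0) a i x.
  by have := HF F0 (fsubset_refl _) x; rewrite ler_norml => /andP[h _]; lra.
have lo : (\sum_(i <- F0) a i x) * (1 - eps / 2) <=
          \sum_(p <- F) a p.1 x * c p.1 p.2 x.
  apply: le_trans (_ : \sum_(p <- [seq (i, j) | i <- F0, j <- G0])
                        a p.1 x * c p.1 p.2 x <= _); last first.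
    apply: sum_sub_le; rewrite ?fset_uniq ?pinj ?fset_uniq //.
    move=> p pP; apply: (fsubsetP sub); by rewrite inE.
  rewrite big_allpairs /= mulr_suml; apply: ler_sum => i _.
  rewrite -mulr_sumr; apply: ler_wpM2l => //.
  by have := HG G0 (fsubset_refl _) i x; rewrite ler_norml => /andP[h _]; lra.
rewrite ler_norml; apply/andP; split; last by lra.
set sa := \sum_(i <- F0) a i x in sa1 sa2 lo.
have : 1 - eps <= sa * (1 - eps / 2).
  have [k0|k0] := leP 0 (1 - eps / 2); first by nra.
  by nra.
lra.
Qed.


Lemma unorm_sub (X : Type) (I : choiceType) (P : set I) (a : I -> X -> R) l :
  (forall i, ~ P i -> forall x, a i x = 0) ->
  unorm_sum_to a l -> unorm_sum_to (fun (p : set_type P) x => a (val p) x) l.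
Proof.
move=> a0 h eps e0; have [F0 HF] := h eps e0.
exists [fset p in pmap insub F0]%fset => F sub x.
pose T := [fset i in [seq val p | p <- F] ++ F0]%fset.
have -> : \sum_(p <- F) a (val p) x = \sum_(i <- T) a i x.
  rewrite -(big_map val predT (fun i => a i x)).
  apply: sum_sub_eq; rewrite ?fset_uniq ?(map_inj_uniq val_inj) ?fset_uniq //.
    by move=> i iF; rewrite /T !inE ?mem_cat; rewrite iF.
  move=> i; rewrite /T !inE ?mem_cat => /orP[->//|iF0] iF.
  have [Pi|nPi] := pselect (P i); last exact: a0.
  exfalso; move/negP: iF; apply.
  have Pi' : i \in P by exact: mem_set.
  apply/mapP; exists (exist _ i Pi') => //.
  apply: (fsubsetP sub); rewrite inE mem_pmap_sub /=; exact: iF0.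
apply: HF; apply/fsubsetP => i iF0; by rewrite /T !inE ?mem_cat iF0 orbT.
Qed.

End Sums.

Section Main.
Variables (R : realType) (X : topologicalType) (G : Type).
Variables (gmul : G -> G -> G) (g1 : G) (ginv : G -> G).
Hypothesis gmulA : forall a b c, gmul a (gmul b c) = gmul (gmul a b) c.
Hypothesis gmul1 : forall a, gmul g1 a = a.
Hypothesis gmulV : forall a, gmul (ginv a) a = g1.
Variable act : G -> X -> X.
Hypothesis actM : forall a b x, act (gmul a b) x = act a (act b x).

Lemma gmulVr a : gmul a (ginv a) = g1.
Proof.
rewrite -[LHS]gmul1 -{1}(gmulV (ginv a)) -gmulA (gmulA (ginv a) a) gmulV gmul1.
exact: gmulV.
Qed.

Lemma gmul1r a : gmul a g1 = a.
Proof. by rewrite -(gmulV a) gmulA gmulVr gmul1. Qed.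

Lemma ginvM a b : ginv (gmul a b) = gmul (ginv b) (ginv a).
Proof.
have h : gmul (gmul a b) (gmul (ginv b) (ginv a)) = g1.
  by rewrite -gmulA (gmulA b) gmulVr gmul1 gmulVr.
by rewrite -[LHS]gmul1r -h gmulA gmulV gmul1.
Qed.

Local Notation M := (fs_mul gmul ginv act).
Local Notation pc := (prod_coef ginv act).

Lemma coefL (m n r : fsum R X G) (q : fs_idx (M m n) * fs_idx r) x :
  pc (M m n) r q x =
  fs_fun m (val q.1).1 x * (fs_fun n (val q.1).2 (act (ginv (fs_grp m (val q.1).1)) x)
    * fs_fun r q.2 (act (ginv (fs_grp n (val q.1).2))
                     (act (ginv (fs_grp m (val q.1).1)) x))).
Proof. by rewrite /prod_coef /gact /= ginvM actM mulrA. Qed.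

Lemma coefR (m n r : fsum R X G) (q : fs_idx m * fs_idx (M n r)) x :
  pc m (M n r) q x =
  fs_fun m q.1 x * (fs_fun n (val q.2).1 (act (ginv (fs_grp m q.1)) x)
    * fs_fun r (val q.2).2 (act (ginv (fs_grp n (val q.2).1))
                     (act (ginv (fs_grp m q.1)) x))).
Proof. by []. Qed.


Section Assoc.
Variables m n r : fsum R X G.

Lemma fwd_in1 (q : fs_idx (M (M m n) r)) :
  ((val (val q).1).2, (val q).2) \in prod_idx ginv act n r.
Proof.
apply: mem_set => H0; apply: (set_mem (valP q)); apply/funext => x.
rewrite coefL.
have := congr1 (fun f => f (act (ginv (fs_grp m (val (val q).1).1)) x)) H0.
by rewrite /prod_coef /gact /= => ->; rewrite mulr0.
Qed.

Definition fwd1 q : fs_idx (M n r) :=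
  @exist _ (fun y => y \in prod_idx ginv act n r) _ (fwd_in1 q).

Lemma fwd_in2 (q : fs_idx (M (M m n) r)) :
  ((val (val q).1).1, fwd1 q) \in prod_idx ginv act m (M n r).
Proof.
apply: mem_set => H0; apply: (set_mem (valP q)); apply/funext => x.
rewrite coefL; have := congr1 (fun f => f x) H0; by rewrite coefR /=.
Qed.

Definition fwd q : fs_idx (M m (M n r)) :=
  @exist _ (fun y => y \in prod_idx ginv act m (M n r)) _ (fwd_in2 q).

Lemma bwd_in1 (q : fs_idx (M m (M n r))) :
  ((val q).1, (val (val q).2).1) \in prod_idx ginv act m n.
Proof.
apply: mem_set => H0; apply: (set_mem (valP q)); apply/funext => x.
rewrite coefR mulrA; have := congr1 (fun f => f x) H0.
by rewrite /prod_coef /gact /= => ->; rewrite mul0r.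
Qed.

Definition bwd1 q : fs_idx (M m n) :=
  @exist _ (fun y => y \in prod_idx ginv act m n) _ (bwd_in1 q).

Lemma bwd_in2 (q : fs_idx (M m (M n r))) :
  (bwd1 q, (val (val q).2).2) \in prod_idx ginv act (M m n) r.
Proof.
apply: mem_set => H0; apply: (set_mem (valP q)); apply/funext => x.
rewrite coefR; have := congr1 (fun f => f x) H0; by rewrite coefL /=.
Qed.

Definition bwd q : fs_idx (M (M m n) r) :=
  @exist _ (fun y => y \in prod_idx ginv act (M m n) r) _ (bwd_in2 q).

Lemma assoc_equiv : fs_equiv (M (M m n) r) (M m (M n r)).
Proof.
exists fwd; split.
  exists bwd.
    case=> [[[[i j] pij] k] pq]; apply: val_inj => /=; congr pair.
    exact: val_inj.
  case=> [[i [[j k] pjk]] pq]; apply: val_inj => /=; congr pair.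
  exact: val_inj.
move=> q; split; first by rewrite /= gmulA.
by apply/funext => x /=; rewrite coefR coefL.
Qed.

End Assoc.

Lemma coef_equiv {m m' n n' : fsum R X G} {e1 e2} :
  (forall i, fs_grp m' (e1 i) = fs_grp m i /\ fs_fun m' (e1 i) = fs_fun m i) ->
  (forall j, fs_grp n' (e2 j) = fs_grp n j /\ fs_fun n' (e2 j) = fs_fun n j) ->
  forall i j, pc m' n' (e1 i, e2 j) = pc m n (i, j).
Proof.
move=> h1 h2 i j; rewrite /prod_coef /=.
by have [-> ->] := h1 i; have [_ ->] := h2 j.
Qed.

Lemma mul_equiv (m m' n n' : fsum R X G) :
  fs_equiv m m' -> fs_equiv n n' -> fs_equiv (M m n) (M m' n').
Proof.
move=> [e1 [[g1' c1 c1'] h1]] [e2 [[g2' c2 c2'] h2]].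
have hc := coef_equiv h1 h2.
have pf : forall q : fs_idx (M m n),
    (e1 (val q).1, e2 (val q).2) \in prod_idx ginv act m' n'.
  case=> [[i j] pq]; apply: mem_set; rewrite /prod_idx /= hc; exact: (set_mem pq).
have pf' : forall q : fs_idx (M m' n'),
    (g1' (val q).1, g2' (val q).2) \in prod_idx ginv act m n.
  case=> [[i j] pq]; apply: mem_set; rewrite /prod_idx /= -hc c1' c2'; exact: (set_mem pq).
exists (fun q => @exist _ (fun y => y \in prod_idx ginv act m' n') _ (pf q)).
split.
  exists (fun q => @exist _ (fun y => y \in prod_idx ginv act m n) _ (pf' q)).
    by case=> [[i j] pq]; apply: val_inj => /=; rewrite c1 c2.
  by case=> [[i j] pq]; apply: val_inj => /=; rewrite c1' c2'.
case=> [[i j] pq]; split.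
  by rewrite /=; have [-> _] := h1 i; have [-> _] := h2 j.
by rewrite /= hc.
Qed.

Hypothesis act_cont : forall a, continuous (act a).

Lemma mul_isP {m n : fsum R X G} : isP m -> isP n ->
  unorm_sum_to (fun p x => pc m n p x ^+ 2) (fun _ => 1) /\ isP (M m n).
Proof.
move=> [cm m0 mnz hm] [cn n0 nnz hn].
have H1 : unorm_sum_to (fun p x => pc m n p x ^+ 2) (fun _ => 1).
  have -> : (fun p x => pc m n p x ^+ 2) = (fun p x => fs_fun m p.1 x ^+ 2 *
      (gact ginv act (fs_grp m p.1) (fs_fun n p.2) x) ^+ 2).
    by apply/funext => p; apply/funext => x; rewrite /prod_coef exprMn.
  apply: (@unorm_prod R X _ _ (fun i x => fs_fun m i x ^+ 2)
     (fun i j x => (gact ginv act (fs_grp m i) (fs_fun n j) x) ^+ 2)).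
  - by move=> i x; rewrite sqr_ge0.
  - by move=> *; rewrite sqr_ge0.
  - exact: hm.
  - move=> eps e0; have [G0 HG] := hn eps e0; exists G0 => GG sG i x; exact: HG.
split => //; split.
- move=> p x; apply: continuousM; first exact: cm.
  apply: continuous_comp; [exact: act_cont | exact: cn].
- move=> p x; rewrite /= /prod_coef /gact; apply: mulr_ge0; [exact: m0 | exact: n0].
- move=> p; exact: (set_mem (valP p)).
- apply: (@unorm_sub R X _ _ (fun q x => pc m n q x ^+ 2)) => //.
  move=> q nq x; have -> : pc m n q = (fun _ => 0) by apply: contrapT.
  by rewrite expr0n.
Qed.

Lemma mul_isPf (m n : fsum R X G) : isPf m -> isPf n -> isPf (M m n).
Proof.
move=> [Pm fm] [Pn fn]; split; first exact: (mul_isP Pm Pn).2.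
have := @finite_preimage _ _ [set: fs_idx m * fs_idx n]
  (val : fs_idx (M m n) -> _) _ _.
rewrite preimage_setT; apply.
- by move=> a b _ _; apply: val_inj.
- rewrite -setXTT; exact: finite_setX.
Qed.

End Main.

Theorem mainTheorem8
  (R : realType)
  (X : topologicalType) (X_compact : compact [set: X]) (X_hausdorff : hausdorff_space X)
  (G : countType) (gmul : G -> G -> G) (g1 : G) (ginv : G -> G)
  (gmulA : forall a b c, gmul a (gmul b c) = gmul (gmul a b) c)
  (gmul1 : forall a, gmul g1 a = a)
  (gmulV : forall a, gmul (ginv a) a = g1)
  (act : G -> X -> X)
  (act1 : forall x, act g1 x = x)
  (actM : forall a b x, act (gmul a b) x = act a (act b x))
  (act_cont : forall a, continuous (act a)) :
  (forall mu nu : fsum R X G, isP mu -> isP nu ->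
     unorm_sum_to (fun p x => prod_coef ginv act mu nu p x ^+ 2)
                  (fun _ => 1)
     /\ isP (fs_mul gmul ginv act mu nu))
  /\ (forall mu nu rho : fsum R X G, isP mu -> isP nu -> isP rho ->
       fs_equiv (fs_mul gmul ginv act (fs_mul gmul ginv act mu nu) rho)
                (fs_mul gmul ginv act mu (fs_mul gmul ginv act nu rho)))
  /\ (forall mu mu' nu nu' : fsum R X G, isP mu -> isP mu' -> isP nu -> isP nu' ->
       fs_equiv mu mu' -> fs_equiv nu nu' ->
       fs_equiv (fs_mul gmul ginv act mu nu) (fs_mul gmul ginv act mu' nu'))
  /\ (forall mu nu : fsum R X G, isPf mu -> isPf nu ->
       isPf (fs_mul gmul ginv act mu nu)).
Proof.
split; [|split; [|split]].
- by move=> mu nu Pm Pn; apply: mul_isP.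
- by move=> mu nu rho _ _ _; apply: assoc_equiv.
- by move=> mu mu' nu nu' _ _ _ _ e1 e2; apply: mul_equiv.
- by move=> mu nu Pm Pn; apply: mul_isPf.
Qed.
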